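(* The restriction of $\Theta$ to $\mathbf H_{ho}$ is an isomorphism of graded Hopf algebras $\mathbf H_{ho}\to\mathbf{FQSym}$.
   Context: A rooted forest is a finite graph each of whose components is a tree with a distinguished root; edges are oriented towards the roots, and for distinct vertices $v,w$ we write $v\twoheadrightarrow w$ if there is an oriented path from $v$ to $w$. An ordered forest with $n$ vertices is a rooted forest with a total order on its vertices, identifying the vertex set with $\{1,\dots,n\}$ (isomorphic ordered forests identified); it is heap-ordered if $i\twoheadrightarrow j$ implies $i>j$. $\mathbf H_{ho}$ is the $K$-vector space ($K=\mathbb R$ or $\mathbb C$) with basis heap-ordered forests (including the empty forest $1$), graded by number of vertices, with product $\mathbb F\mathbb G$ = disjoint union where the vertices of $\mathbb F$ (with $k$ vertices) keep labels $1..k$ and vertex $j$ of $\mathbb G$ gets label $k+j$, and coproduct $\Delta(\mathbb F)=\sum_{\vec v\models V(\mathbb F)}\mathrm{Roo}_{\vec v}\mathbb F\otimes\mathrm{Lea}_{\vec v}\mathbb F$, where an admissible cut $\vec v$ is a (possibly empty) set of vertices no two of which satisfy $v\twoheadrightarrow w$, $\mathrm{Lea}_{\vec v}\mathbb F$ is the subforest on $\vec v\cup\{w:\exists v\in\vec v, w\twoheadrightarrow v\}$, $\mathrm{Roo}_{\vec v}\mathbb F$ the subforest on the remaining vertices, both ordered by restriction. $\Sigma_n$ is the symmetric group with $(\sigma\circ\tau)(i)=\sigma(\tau(i))$; $(\sigma\otimes\tau)(i)=\sigma(i)$ for $i\le k$ and $k+\tau(i-k)$ for $i>k$ ($\sigma\in\Sigma_k,\tau\in\Sigma_l$);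 $Sh(k,l)=\{\zeta\in\Sigma_{k+l}:\zeta^{-1}(1)<\dots<\zeta^{-1}(k),\ \zeta^{-1}(k+1)<\dots<\zeta^{-1}(k+l)\}$. $\mathbf{FQSym}$ is the graded vector space with basis $\bigsqcup_{n\ge0}\Sigma_n$, product $\sigma\cdot\tau=\sum_{\epsilon\in Sh(k,l)}(\sigma\otimes\tau)\circ\epsilon$, coproduct $\Delta(\sigma)=\sum_{k=0}^n\sigma_1^{(k)}\otimes\sigma_2^{(k)}$ where $\sigma_1^{(k)},\sigma_2^{(k)}$ are the standardizations of the words $(\sigma(1),\dots,\sigma(k))$ and $(\sigma(k+1),\dots,\sigma(n))$. For an ordered forest $\mathbb F$ with $n$ vertices, $S_{\mathbb F}=\{\sigma\in\Sigma_n: i\twoheadrightarrow j\Rightarrow\sigma^{-1}(i)>\sigma^{-1}(j)\}$, and $\Theta(\mathbb F)=\sum_{\sigma\in S_{\mathbb F}}\sigma$, extended linearly. *)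

(* Defs.v *)
From HB Require Import structures.
From mathcomp Require Import all_boot all_order all_algebra all_fingroup.
Set Implicit Arguments. Unset Strict Implicit. Unset Printing Implicit Defensive.
Import GRing.Theory.
Local Open Scope ring_scope.

(* ---------- Ordered forests on n vertices ----------
   Vertex i : 'I_n stands for the label i+1.  An ordered forest is encoded by
   its parent function: f i = Some j  means the (root-oriented) edge i -> j,
   f i = None means i is a root. *)
Definition pfun (n : nat) := {ffun 'I_n -> option 'I_n}.

Definition pedge n (f : pfun n) : rel 'I_n := fun i j => f i == Some j.

Definition reach n (f : pfun n) (v w : 'I_n) : bool :=
  (v != w) && connect (pedge f) v w.

Definition is_forest n (f : pfun n) : bool :=
  [forall v, forall w, pedge f v w ==> ~~ connect (pedge f) w v].

Definition is_heap n (f : pfun n) : bool :=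
  [forall v, forall w, reach f v w ==> (w < v)%N].

Definition is_hof n (f : pfun n) : bool := is_forest f && is_heap f.

(* basis of the degree-n part of H_ho *)
Definition hof (n : nat) := {f : pfun n | is_hof f}.

Definition empty_forest : pfun 0 := [ffun i => None].

(* product: disjoint union, G's vertices shifted by k *)
Definition fconcat k l (f : pfun k) (g : pfun l) : pfun (k + l) :=
  [ffun i => match split i with
             | inl a => omap (lshift l) (f a)
             | inr b => omap (@rshift k l) (g b)
             end].

(* a is the ordered subforest of f induced on A, relabelled by the unique
   increasing bijection 'I_k -> A (restriction of the order) *)
Definition restr_is n k (f : pfun n) (A : {set 'I_n}) (a : pfun k) : bool :=
  [exists x : {ffun 'I_k -> 'I_n},
     [forall i : 'I_k, forall j : 'I_k, (i < j)%N ==> (x i < x j)%N]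
  && [forall v : 'I_n, (v \in A) == [exists i : 'I_k, x i == v]]
  && [forall i : 'I_k, forall j : 'I_k, (a i == Some j) == (f (x i) == Some (x j))]].

Definition adm_cut n (f : pfun n) (c : {set 'I_n}) : bool :=
  [forall v in c, forall w in c, ~~ reach f v w].

Definition lea n (f : pfun n) (c : {set 'I_n}) : {set 'I_n} :=
  [set w | (w \in c) || [exists v in c, reach f w v]].

Section Alg.
Variable K : numFieldType.

(* (k,l)-component of the coproduct of a forest with k+l vertices:
   coefficient of Roo (k vertices) (x) Lea (l vertices), tensors of basis
   elements represented as pairs *)
Definition hcop k l (f : pfun (k + l)) : {ffun pfun k * pfun l -> K} :=
  [ffun p => (#|[pred c : {set 'I_(k + l)} | adm_cut f c
                  && restr_is f (~: lea f c) p.1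
                  && restr_is f (lea f c) p.2]|)%:R].

Definition ptens k l (s : 'S_k) (t : 'S_l) (i : 'I_(k + l)) : 'I_(k + l) :=
  match split i with
  | inl a => lshift l (s a)
  | inr b => rshift k (t b)
  end.

Definition is_shuffle k l (e : 'S_(k + l)) : bool :=
  [forall i : 'I_(k + l), forall j : 'I_(k + l),
     ((i < j)%N && ((j < k)%N || (k <= i)%N)) ==>
       ((e^-1)%g i < (e^-1)%g j)%N].

Definition fqmul k l (s : 'S_k) (t : 'S_l) : {ffun 'S_(k + l) -> K} :=
  [ffun r : 'S_(k + l) => (#|[pred e : 'S_(k + l) | is_shuffle e
                  && [forall i, r i == ptens s t (e i)]]|)%:R].

Definition mulF k l (v : {ffun 'S_k -> K}) (w : {ffun 'S_l -> K})
  : {ffun 'S_(k + l) -> K} :=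
  [ffun r => \sum_(s : 'S_k) \sum_(t : 'S_l) v s * w t * fqmul s t r].

Definition std_of k n (x : 'I_k -> 'I_n) (a : 'S_k) : bool :=
  [forall i, forall j, (a i < a j)%N == (x i < x j)%N].

(* (k,l)-component of the coproduct of s in S_(k+l) *)
Definition fqcop k l (s : 'S_(k + l)) : {ffun 'S_k * 'S_l -> K} :=
  [ffun p => ((std_of (fun i => s (lshift l i)) p.1
               && std_of (fun j => s (rshift k j)) p.2 : bool) : nat)%:R].

Definition copF k l (v : {ffun 'S_(k + l) -> K}) : {ffun 'S_k * 'S_l -> K} :=
  [ffun p => \sum_(s : 'S_(k + l)) v s * fqcop s p].

Definition SF n (f : pfun n) : pred 'S_n :=
  [pred s : 'S_n | [forall i, forall j,
     reach f i j ==> ((s^-1)%g j < (s^-1)%g i)%N]].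

Definition theta n (f : pfun n) : {ffun 'S_n -> K} :=
  [ffun s => ((s \in SF f : bool) : nat)%:R].

Definition thetaH n (v : {ffun hof n -> K}) : {ffun 'S_n -> K} :=
  [ffun s => \sum_(f : hof n) v f * theta (val f) s].

Definition thetaT k l (u : {ffun pfun k * pfun l -> K})
  : {ffun 'S_k * 'S_l -> K} :=
  [ffun q => \sum_(p : pfun k * pfun l) u p * (theta p.1 q.1 * theta p.2 q.2)].

End Alg.

(* Main.v *)
Require Import Defs.
From HB Require Import structures.
From mathcomp Require Import all_boot all_order all_algebra all_fingroup.
Import GRing.Theory.
Set Implicit Arguments. Unset Strict Implicit. Unset Printing Implicit Defensive.

Lemma connect_back (T : finType) (e : rel T) (Q : pred T) :
  (forall a b, e a b -> Q b -> Q a) ->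
  forall a b, connect e a b -> Q b -> Q a.
Proof.
move=> HQ a b /connectP [p]; elim: p a => [|x p IH] a /=; first by move=> _ ->.
by case/andP=> eax px lb Qb; apply: (HQ _ _ eax); apply: IH px lb Qb.
Qed.

Definition lab n (f : pfun n) := [forall i, if f i is Some j then (j < i)%N else true].

Lemma labP n (f : pfun n) : lab f -> forall i j, f i = Some j -> (j < i)%N.
Proof. by move=> /forallP H i j E; have := H i; rewrite E. Qed.

Lemma lab_conn n (f : pfun n) : lab f -> forall u v,
  connect (pedge f) u v -> (v <= u)%N.
Proof.
move=> L u v C; apply: (@connect_back _ _ (fun x : 'I_n => (v <= x)%N) _ _ _ C) => //.
move=> a b /eqP E vb; apply: leq_trans vb _; apply: ltnW; exact: labP E.
Qed.

Lemma hofE n (f : pfun n) : is_hof f = lab f.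
Proof.
apply/idP/idP.
  case/andP=> /forallP Fo /forallP He; apply/forallP=> i.
  case E: (f i) => [j|] //.
  have Hij := forallP (He i) j; move: Hij; rewrite /reach.
  have -> : connect (pedge f) i j by apply: connect1; rewrite /pedge E.
  case: eqP => [eij|_]; last by rewrite andbT; apply.
  have := forallP (Fo i) j; rewrite /pedge E eqxx /= eij connect0 //.
move=> L; apply/andP; split; apply/forallP=> v; apply/forallP=> w.
  apply/implyP=> /eqP E; apply/negP=> C.
  have := lab_conn L C; have := labP L E; rewrite ltnNge => /negP; done.
apply/implyP; case/andP=> nvw C; have := lab_conn L C.
by rewrite leq_eqVlt => /orP [/eqP/val_inj E|//]; rewrite E eqxx in nvw.
Qed.

Lemma hof_reach n (f : pfun n) : lab f -> forall u v,
  reach f u v = connect (pedge f) u v && (v < u)%N.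
Proof.
move=> L u v; rewrite /reach; case C: (connect _ _ _); rewrite ?andbF //.
have := lab_conn L C; rewrite andbT leq_eqVlt.
case: (altP (u =P v)) => [->|nuv]; first by rewrite ltnn.
by rewrite (inj_eq val_inj) eq_sym (negbTE nuv).
Qed.

Definition SFe n (f : pfun n) (s : 'S_n) :=
  [forall i, forall j, (f i == Some j) ==> ((s^-1)%g j < (s^-1)%g i)%N].

Lemma SFE n (f : pfun n) (s : 'S_n) : lab f -> (s \in SF f) = SFe f s.
Proof.
move=> L; rewrite inE; apply/forallP/forallP => H i; apply/forallP => j;
  apply/implyP => Hij; have := forallP (H i) j.
  rewrite /reach; have -> : connect (pedge f) i j by apply: connect1.
  have -> // : i != j; apply/eqP=> eij; have := labP L (eqP Hij).
  by rewrite eij ltnn.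
case/andP: Hij => nij C => _.
have: ((s^-1)%g j <= (s^-1)%g i)%N.
  apply: (@connect_back _ _ (fun x : 'I_n => ((s^-1)%g j <= (s^-1)%g x)%N) _ _ _ C) => //.
  move=> a b eab Hb; apply: leq_trans Hb _; apply: ltnW.
  exact: (implyP (forallP (H a) b) eab).
rewrite leq_eqVlt => /orP [/eqP/val_inj/perm_inj E|//].
by rewrite E eqxx in nij.
Qed.

Definition incr k n (x : 'I_k -> 'I_n) := forall i j : 'I_k, (i < j)%N -> (x i < x j)%N.

Section Incr.
Variables (k n : nat) (x : 'I_k -> 'I_n) (Hx : incr x).

Lemma incr_ltE i j : (x i < x j)%N = (i < j)%N.
Proof.
case: (ltngtP i j) => [/Hx //|/Hx h|/val_inj ->]; last by rewrite ltnn.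
by apply/negbTE; rewrite -leqNgt ltnW.
Qed.

Lemma incr_leE i j : (x i <= x j)%N = (i <= j)%N.
Proof. by rewrite leqNgt incr_ltE -leqNgt. Qed.

Lemma incr_inj : injective x.
Proof.
move=> i j E; apply/val_inj/eqP; rewrite eqn_leq -(incr_leE i j) -(incr_leE j i) E leqnn //.
Qed.
End Incr.

Lemma incr_uniq k n (x y : 'I_k -> 'I_n) : incr x -> incr y ->
  (forall i, exists j, x i = y j) -> (forall j, exists i, y j = x i) -> x =1 y.
Proof.
move=> Hx Hy Ixy Iyx.
suff H : forall m (i : 'I_k), (i < m)%N -> x i = y i by move=> i; apply: (H i.+1).
elim=> [//|m IH] i; rewrite ltnS leq_eqVlt => /orP [/eqP Eim|/IH //].
have IH' : forall j : 'I_k, (j < i)%N -> x j = y j by move=> j; rewrite Eim; apply: IH.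
apply/val_inj/eqP; rewrite eqn_leq; apply/andP; split.
  have [j Ej] := Iyx i; rewrite Ej (incr_leE Hx) leqNgt; apply/negP => ji.
  by have := IH' _ ji; rewrite -Ej => /(incr_inj Hy) E; rewrite E ltnn in ji.
have [j Ej] := Ixy i; rewrite Ej (incr_leE Hy) leqNgt; apply/negP => ji.
by have := IH' _ ji; rewrite -Ej => /(incr_inj Hx) E; rewrite E ltnn in ji.
Qed.

Lemma enum_incr n (A : {set 'I_n}) : incr (fun i : 'I_#|A| => enum_val i).
Proof.
have inc_A : sorted ltn (map val (enum A)).
  rewrite -[enum _](eq_filter (mem_enum _)).
  rewrite -(eq_filter (mem_map val_inj _)) -filter_map.
  by rewrite (sorted_filter ltn_trans) // unlock val_ord_enum iota_ltn_sorted.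
move=> i j ij; have x0 := enum_val i.
rewrite (enum_val_nth x0 i) (enum_val_nth x0 j).
rewrite -(nth_map x0 0%N val) -?cardE // -(nth_map x0 0%N val) -?cardE //.
apply: (sorted_ltn_nth ltn_trans) => //; rewrite inE size_map -cardE //.
Qed.

Lemma incr_exists n (A : {set 'I_n}) k : #|A| = k ->
  exists x : 'I_k -> 'I_n, incr x /\ forall v, (v \in A) = [exists i, x i == v].
Proof.
move=> E; subst k; exists (fun i => enum_val i); split; first exact: enum_incr.
move=> v; apply/idP/existsP => [vA|[i /eqP <-]]; last exact: enum_valP.
by exists (enum_rank_in vA v); rewrite enum_rankK_in.
Qed.

Lemma incr_card k n (x : 'I_k -> 'I_n) (A : {set 'I_n}) : incr x ->
  (forall v, (v \in A) = [exists i, x i == v]) -> #|A| = k.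
Proof.
move=> Hx HA; have -> : A = [set x i | i in 'I_k].
  by apply/setP=> v; rewrite HA; apply/existsP/imsetP => [[i /eqP <-]|[i _ ->]];
    exists i.
by rewrite card_imset ?cardsT ?card_ord //; apply: incr_inj.
Qed.

Lemma restr_isP n k (f : pfun n) (A : {set 'I_n}) (a : pfun k) : restr_is f A a ->
  exists x : 'I_k -> 'I_n, [/\ incr x, forall v, (v \in A) = [exists i, x i == v]
    & forall i j, (a i == Some j) = (f (x i) == Some (x j))].
Proof.
case/existsP=> x /andP [/andP [/forallP H1 /forallP H2] /forallP H3].
exists x; split.
- by move=> i j ij; apply: (implyP (forallP (H1 i) j) ij).
- by move=> v; apply/eqP; apply: H2.
by move=> i j; have /eqP := forallP (H3 i) j.
Qed.

Lemma restr_isI n k (f : pfun n) (A : {set 'I_n}) (a : pfun k) (x : 'I_k -> 'I_n) :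
  incr x -> (forall v, (v \in A) = [exists i, x i == v]) ->
  (forall i j, (a i == Some j) = (f (x i) == Some (x j))) -> restr_is f A a.
Proof.
move=> Hx HA Ha; apply/existsP; exists [ffun i => x i]; apply/andP; split;
  first (apply/andP; split).
- by apply/forallP=> i; apply/forallP=> j; apply/implyP; rewrite !ffunE; apply: Hx.
- by apply/forallP=> v; rewrite HA; apply/eqP; apply: eq_existsb=> i; rewrite ffunE.
by apply/forallP=> i; apply/forallP=> j; rewrite !ffunE Ha.
Qed.

Lemma restr_card n k (f : pfun n) (A : {set 'I_n}) (a : pfun k) : restr_is f A a -> #|A| = k.
Proof. by case/restr_isP=> x [Hx HA _]; apply: incr_card Hx HA. Qed.

Lemma restr_lab n k (f : pfun n) (A : {set 'I_n}) (a : pfun k) : lab f -> restr_is f A a -> lab a.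
Proof.
move=> L /restr_isP [x [Hx _ Ha]]; apply/forallP=> i; case E: (a i) => [j|] //.
have := Ha i j; rewrite E eqxx => /esym/eqP F.
by rewrite -(incr_ltE Hx); apply: labP F.
Qed.

Lemma restr_exists n k (f : pfun n) (A : {set 'I_n}) : #|A| = k ->
  exists a : pfun k, restr_is f A a.
Proof.
move=> /incr_exists [x [Hx HA]].
exists [ffun i => if f (x i) is Some v then [pick j | x j == v] else None].
have Hx' := Hx; apply: restr_isI Hx HA _ => i j; rewrite ffunE.
case: (f (x i)) => [v|] //; case: pickP => [j' /eqP Ej'|N].
  apply/eqP/eqP => [[<-]|[E]]; first by rewrite Ej'.
  by congr Some; apply: (incr_inj Hx'); rewrite Ej'.
by apply/eqP/eqP => // -[E]; have := N j; rewrite E eqxx.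
Qed.

Lemma restr_uniq n k (f : pfun n) (A : {set 'I_n}) (a a' : pfun k) :
  restr_is f A a -> restr_is f A a' -> a = a'.
Proof.
case/restr_isP=> x [Hx HA Ha]; case/restr_isP=> y [Hy HA' Ha'].
have Exy : x =1 y.
  apply: incr_uniq Hx Hy _ _.
    move=> i; have xA : x i \in A.
      by rewrite HA; apply/existsP; exists i.
    by move: xA; rewrite HA' => /existsP [j /eqP <-]; exists j.
  move=> j; have yA : y j \in A.
    by rewrite HA'; apply/existsP; exists j.
  by move: yA; rewrite HA => /existsP [i /eqP <-]; exists i.
have E i j : (a i == Some j) = (a' i == Some j) by rewrite Ha Ha' !Exy.
apply/ffunP=> i; case Ei: (a i) => [j|].
  by have := E i j; rewrite Ei eqxx => /esym/eqP.
case Ei': (a' i) => [j|] //; by have := E i j; rewrite Ei Ei' eqxx.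
Qed.

Definition okp n (i : 'I_n) : pred (option 'I_n) :=
  fun o => if o is Some j then (j < i)%N else true.

Lemma card_okp n (i : 'I_n) : #|okp i| = i.+1.
Proof.
have Hi : (i <= n)%N by apply: ltnW.
rewrite (cardD1 None) /=.
have -> : #|[predD1 okp i & None]| = #|image (@Some _) (image (widen_ord Hi) 'I_i)|.
  apply: eq_card => o; rewrite !inE; apply/idP/imageP.
    case: o => [j|] //= ji; exists j => //; apply/imageP.
    by exists (Ordinal ji) => //; apply: val_inj.
  case=> j /imageP [j' _ ->] ->; by rewrite unfold_in /okp /=; exact: ltn_ord j'.
rewrite card_image; last by move=> ? ? [].
by rewrite card_image ?card_ord //; by move=> a b /(congr1 val) E; apply: val_inj.
Qed.

Lemma card_hof n : #|{: hof n}| = n`!.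
Proof.
rewrite card_sig.
have -> : #|[pred f : pfun n | is_hof f]| = #|(family (@okp n) : simpl_pred (pfun n))|.
  apply: eq_card => f; rewrite !inE hofE; apply/forallP/familyP => H i; exact: H.
rewrite card_family /image_mem (eq_map (@card_okp n)) foldrE big_map.
rewrite fact_prod big_add1 /= big_mkord -big_enum /=.
by [].
Qed.

Lemma exists_max (T : finType) (R : rel T) (P : pred T) :
  (forall x y z, R x y -> R y z -> R x z) -> (forall x, ~~ R x x) ->
  forall x0, P x0 -> exists x, P x /\ forall y, P y -> ~~ R x y.
Proof.
move=> Rt Ri x0 Px0.
suff H : forall m x, #|[set y | P y && R x y]| <= m -> P x ->
   exists x, P x /\ forall y, P y -> ~~ R x y by apply: (H _ x0 (leqnn _)).
elim=> [|m IH] x Hm Px.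
  exists x; split=> // y Py; apply/negP=> Rxy.
  by move: Hm; rewrite leqn0 cards_eq0 => /eqP/setP/(_ y); rewrite !inE Py Rxy.
case: (boolP [exists y, P y && R x y]) => [/existsP [y /andP [Py Rxy]]|N].
  apply: (IH y _ Py); rewrite -ltnS; apply: leq_trans Hm; apply: proper_card.
  apply/properP; split.
    apply/subsetP=> z; rewrite !inE => /andP [Pz Ryz].
    by rewrite Pz (Rt _ _ _ Rxy Ryz).
  by exists y; rewrite !inE ?Py ?Rxy ?Ri.
exists x; split=> // y Py; apply/negP=> Rxy; move/negP: N; apply.
by apply/existsP; exists y; rewrite Py Rxy.
Qed.

Section Tri.
Variable n : nat.

Definition Pt (t : 'S_n) (i j : 'I_n) := (j < i)%N && ((t^-1)%g j < (t^-1)%g i)%N.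

Definition Tf (t : 'S_n) : pfun n :=
  [ffun i => if [pick j | Pt t i j] is Some j0 then
     Some [arg max_(j > j0 | Pt t i j) val ((t^-1)%g j)] else None].

Lemma Tf_spec t i :
  (Tf t i = None /\ forall j, ~~ Pt t i j) \/
  exists m, [/\ Tf t i = Some m, Pt t i m &
                forall j, Pt t i j -> ((t^-1)%g j <= (t^-1)%g m)%N].
Proof.
rewrite ffunE; case: pickP => [j0 Hj0|N]; [right|left; split=> // j; rewrite N //].
by case: arg_maxnP => // m Pm Hm; exists m; split.
Qed.

Lemma Tf_lab t : lab (Tf t).
Proof.
apply/forallP=> i; case: (Tf_spec t i) => [[-> _]|[m [-> /andP [H _] _]]] //.
Qed.

Lemma Tf_SF t : SFe (Tf t) t.
Proof.
apply/forallP=> i; apply/forallP=> j; apply/implyP=> /eqP E.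
case: (Tf_spec t i) => [[E' _]|[m [E' /andP [_ H] _]]]; rewrite E' in E => //.
by case: E => <-.
Qed.

Definition code (t : 'S_n) (i : 'I_n) := #|[set j | Pt t i j]|.

Definition lexlt (c d : 'I_n -> nat) :=
  [exists i : 'I_n, [forall j : 'I_n, (j < i)%N ==> (c j == d j)] && (c i < d i)%N].

Lemma lexlt_irr c : ~~ lexlt c c.
Proof. by apply/existsP=> [[i /andP [_]]]; rewrite ltnn. Qed.

Lemma lexlt_trans c d e : lexlt c d -> lexlt d e -> lexlt c e.
Proof.
case/existsP=> i /andP [/forallP H1 L1]; case/existsP=> j /andP [/forallP H2 L2].
have E1 (m : 'I_n) : (m < i)%N -> c m = d m by move=> mi; apply/eqP; apply: (implyP (H1 m)).
have E2 (m : 'I_n) : (m < j)%N -> d m = e m by move=> mj; apply/eqP; apply: (implyP (H2 m)).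
apply/existsP; case: (ltngtP i j) => [ij|ji|/val_inj eij].
- exists i; rewrite -(E2 _ ij) L1 andbT; apply/forallP=> m; apply/implyP=> mi.
  by rewrite E1 // E2 //; apply: ltn_trans ij.
- exists j; rewrite (E1 _ ji) L2 andbT; apply/forallP=> m; apply/implyP=> mj.
  by rewrite E1 ?E2 //; apply: ltn_trans ji.
exists i; apply/andP; split; last by apply: ltn_trans L1 _; rewrite eij.
apply/forallP=> m; apply/implyP=> mi.
by rewrite E1 // E2 // -eij.
Qed.

Lemma perm_ltn_swap (p : 'S_n) a b : a != b -> ((p a < p b)%N = ~~ (p b < p a)%N).
Proof.
move=> nab; rewrite -leqNgt [(p a <= p b)%N]leq_eqVlt; case: eqP => // E.
by have E' := perm_inj (ord_inj E); rewrite E' eqxx in nab.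
Qed.

Lemma tri_key (t s : 'S_n) : SFe (Tf t) s -> t != s -> lexlt (code t) (code s).
Proof.
move=> HS nts.
pose pt := (t^-1)%g; pose ps := (s^-1)%g.
pose agr (a b : 'I_n) := ((pt a < pt b)%N == (ps a < ps b)%N).
have agr_sym a b : agr a b = agr b a.
  rewrite /agr; case: (altP (a =P b)) => [->//|nab].
  by rewrite (perm_ltn_swap pt nab) (perm_ltn_swap ps nab) (inj_eq negb_inj).
pose bad (i : 'I_n) := [exists j : 'I_n, (j < i)%N && ~~ agr j i].
have below N : (forall b : 'I_n, (b < N)%N -> ~~ bad b) ->
    forall a b : 'I_n, (a < N)%N -> (b < N)%N -> agr a b.
  move=> HN a b aN bN; case: (ltngtP a b) => [ab|ba|E]; last by rewrite (ord_inj E) /agr !ltnn.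
    have /existsPn /(_ a) := HN b bN; by rewrite ab /= negbK.
  by rewrite agr_sym; have /existsPn /(_ b) := HN a aN; rewrite ba /= negbK.
case: (boolP [exists i, bad i]) => [/existsP [i1 bi1]|nb].
  case: (@arg_minnP _ i1 bad (fun i => val i) bi1) => i0 bi0 mini0.
  have nbelow (b : 'I_n) : (b < i0)%N -> ~~ bad b.
    by move=> bi; apply/negP=> /mini0; rewrite leqNgt bi.
  have ag := below _ nbelow.
  have sub (m : 'I_n) : Pt t i0 m -> Pt s i0 m.
    move=> Hm; case: (Tf_spec t i0) => [[_ N]|[mx [E Pmx Hmx]]].
      by have := N m; rewrite Hm.
    have Hsm : (ps mx < ps i0)%N.
      by have := implyP (forallP (forallP HS i0) mx); rewrite E eqxx; apply.
    case/andP: Hm => mi0 Hm; rewrite /Pt mi0 /=.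
    case: (altP (m =P mx)) => [->//|nmx].
    have : (pt m < pt mx)%N.
      by rewrite ltn_neqAle Hmx /Pt ?mi0 ?Hm // andbT (inj_eq val_inj) (inj_eq perm_inj).
    case/andP: Pmx => mxi0 _.
    have /eqP -> := ag m mx mi0 mxi0 => H; apply: ltn_trans H Hsm.
  apply/existsP; exists i0; apply/andP; split.
    apply/forallP=> j; apply/implyP=> ji0; apply/eqP; rewrite /code; apply: eq_card => m.
    rewrite !inE /Pt; case: (ltnP m j) => //= mj.
    by have /eqP := ag m j (ltn_trans mj ji0) ji0.
  rewrite /code; apply: proper_card; apply/properP; split.
    by apply/subsetP=> m; rewrite !inE; apply: sub.
  case/existsP: bi0 => j /andP [ji0 nag].
  have nt : ~~ Pt t i0 j.
    apply/negP=> Pj; have Ps := sub _ Pj; move: Pj Ps nag.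
    by rewrite /Pt /agr ji0 /= => -> ->.
  exists j; rewrite !inE //.
  move: nt nag; rewrite /Pt /agr ji0 /= => /negbTE ->.
  by case: (ps j < ps i0)%N.
exfalso; move/negP: nts; apply; apply/eqP.
have ag := below n (fun b _ => (existsPn nb) b).
pose h i := ps (t i).
have Hh : incr h.
  move=> i j ij; have /eqP := ag (t i) (t j) (ltn_ord _) (ltn_ord _).
  by rewrite /pt !permK ij => <-.
have Hs : forall j : 'I_n, exists i, j = h i.
  by move=> j; exists (t^-1 (s j))%g; rewrite /h /ps permKV permK.
have Eh := @incr_uniq n n h id Hh (fun i j ij => ij) (fun i => ex_intro _ (h i) erefl) Hs.
apply/permP=> i; have := Eh i; rewrite /h /ps => E.
by have := congr1 s E; rewrite permKV.
Qed.

End Tri.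

Lemma sum_enum (K : numFieldType) (T : finType) (F : T -> K) :
  (\sum_(x : T) F x = \sum_(i < #|T|) F (enum_val i))%R.
Proof.
rewrite (reindex (@enum_val T T)) //=; apply: onW_bij; apply: enum_val_bij.
Qed.

Section Bij.
Variables (K : numFieldType) (n : nat).
Local Open Scope ring_scope.

Definition Tof (t : 'S_n) : hof n := exist _ (Tf t) (etrans (hofE _) (Tf_lab t)).

Definition Amx : 'M[K]_(#|{: hof n}|, #|{: 'S_n}|) :=
  \matrix_(i, j) theta K (val (enum_val i)) (enum_val j).

Definition vecH (v : {ffun hof n -> K}) : 'rV_#|{: hof n}| := \row_i v (enum_val i).
Definition vecS (w : {ffun 'S_n -> K}) : 'rV_#|{: 'S_n}| := \row_i w (enum_val i).
Definition unH (u : 'rV_#|{: hof n}|) : {ffun hof n -> K} := [ffun f => u 0 (enum_rank f)].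
Definition unS (u : 'rV_#|{: 'S_n}|) : {ffun 'S_n -> K} := [ffun f => u 0 (enum_rank f)].

Lemma vecHK : cancel unH vecH.
Proof. by move=> u; apply/rowP=> i; rewrite !mxE ffunE enum_valK. Qed.
Lemma unHK : cancel vecH unH.
Proof. by move=> v; apply/ffunP=> f; rewrite !ffunE mxE enum_rankK. Qed.
Lemma vecSK : cancel unS vecS.
Proof. by move=> u; apply/rowP=> i; rewrite !mxE ffunE enum_valK. Qed.
Lemma unSK : cancel vecS unS.
Proof. by move=> v; apply/ffunP=> f; rewrite !ffunE mxE enum_rankK. Qed.

Lemma thetaH_mx v : thetaH v = unS (vecH v *m Amx).
Proof.
apply/ffunP=> s; rewrite !ffunE !mxE sum_enum; apply: eq_bigr => i _.
by rewrite !mxE enum_rankK.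
Qed.

Lemma theta01 (f : pfun n) s : theta K f s = ((s \in SF f : bool) : nat)%:R.
Proof. by rewrite ffunE. Qed.

Lemma Amx_free : row_free Amx^T.
Proof.
apply: inj_row_free => v Hv; apply/rowP=> j; rewrite mxE.
pose w (s : 'S_n) := v 0 (enum_rank s).
apply/eqP; rewrite -[j]enum_valK; apply/negP=> /negP nz.
have [t [Pt Mt]] := @exists_max _ (fun t s => lexlt (code t) (code s))
   (fun s => w s != 0) (fun x y z => @lexlt_trans n _ _ _) (fun x => lexlt_irr _) _ nz.
have E : (v *m Amx^T) 0 (enum_rank (Tof t)) = \sum_(s : 'S_n) w s * theta K (Tf t) s.
  rewrite !mxE [RHS]sum_enum; apply: eq_bigr => k _; rewrite !mxE enum_rankK /w enum_valK //.
move: E; rewrite Hv mxE (bigD1 t) //= big1 ?addr0.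
  by rewrite theta01 SFE ?Tf_lab // Tf_SF mulr1 => /esym/eqP; rewrite (negbTE Pt).
move=> s nst; rewrite theta01; case: (boolP (s \in SF (Tf t))); last by rewrite mulr0.
rewrite SFE ?Tf_lab // => H; have := tri_key H; rewrite eq_sym nst => /(_ isT) L.
case: (eqVneq (w s) 0) => [->|nz']; first by rewrite mul0r.
by have := Mt s nz'; rewrite L.
Qed.

Lemma Amx_rank : \rank Amx = #|{: 'S_n}|.
Proof. by rewrite -mxrank_tr; apply/eqP; apply: Amx_free. Qed.

Lemma Amx_full : row_full Amx.
Proof. by rewrite /row_full Amx_rank. Qed.

Lemma Amx_rfree : row_free Amx.
Proof. by rewrite /row_free Amx_rank card_hof -card_Sn. Qed.

Lemma thetaH_bij : bijective (@thetaH K n).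
Proof.
exists (fun w => unH (vecS w *m pinvmx Amx)).
  by move=> v; rewrite thetaH_mx vecSK mulmxKp ?unHK //; apply: Amx_rfree.
by move=> w; rewrite thetaH_mx vecHK mulmxKpV ?unSK //; apply: submx_full; apply: Amx_full.
Qed.

End Bij.

Lemma split_l k l (a : 'I_k) : split (lshift l a) = inl a.
Proof. exact: (@unsplitK k l (inl a)). Qed.
Lemma split_r k l (b : 'I_l) : split (rshift k b) = inr b.
Proof. exact: (@unsplitK k l (inr b)). Qed.

Lemma fconcat_l k l (f : pfun k) (g : pfun l) a :
  fconcat f g (lshift l a) = omap (lshift l) (f a).
Proof. by rewrite ffunE split_l. Qed.
Lemma fconcat_r k l (f : pfun k) (g : pfun l) b :
  fconcat f g (rshift k b) = omap (@rshift k l) (g b).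
Proof. by rewrite ffunE split_r. Qed.

Lemma fconcat_lab k l (f : pfun k) (g : pfun l) : lab f -> lab g -> lab (fconcat f g).
Proof.
move=> Lf Lg; apply/forallP=> i; case: (split_ordP i) => [a ->|b ->].
  by rewrite fconcat_l; case E: (f a) => [j|] //=; exact: (labP Lf E).
rewrite fconcat_r; case E: (g b) => [j|] //=; rewrite ltn_add2l; exact: (labP Lg E).
Qed.

Lemma theta_empty (K : numFieldType) : theta K empty_forest = [ffun _ => 1%R].
Proof.
apply/ffunP=> s; rewrite !ffunE.
have -> : s \in SF empty_forest by rewrite inE; apply/forallP=> -[].
by [].
Qed.

Lemma hcop_hof (K : numFieldType) k l (f : pfun (k + l)) (p : pfun k * pfun l) :
  is_hof f -> hcop K f p != 0%R -> is_hof p.1 && is_hof p.2.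
Proof.
rewrite hofE => L; rewrite ffunE; case: (pickP [pred c : {set 'I_(k + l)} | adm_cut f c
                  && restr_is f (~: lea f c) p.1 && restr_is f (lea f c) p.2]).
  move=> c /andP [/andP [_ H1] H2] _.
  by rewrite !hofE (restr_lab L H1) (restr_lab L H2).
by move=> N; rewrite (eq_card0 N) eqxx.
Qed.

Definition mrg k l n (x : 'I_k -> 'I_n) (y : 'I_l -> 'I_n) (i : 'I_(k + l)) : 'I_n :=
  match split i with inl a => x a | inr b => y b end.

Lemma mrg_l k l n (x : 'I_k -> 'I_n) (y : 'I_l -> 'I_n) a : mrg x y (lshift l a) = x a.
Proof. by rewrite /mrg split_l. Qed.
Lemma mrg_r k l n (x : 'I_k -> 'I_n) (y : 'I_l -> 'I_n) b : mrg x y (rshift k b) = y b.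
Proof. by rewrite /mrg split_r. Qed.

Lemma mrg_inj k l n (x : 'I_k -> 'I_n) (y : 'I_l -> 'I_n) :
  injective x -> injective y -> (forall a b, x a != y b) -> injective (mrg x y).
Proof.
move=> Ix Iy Dxy i j.
case: (split_ordP i) => [a ->|b ->]; case: (split_ordP j) => [a' ->|b' ->];
  rewrite ?mrg_l ?mrg_r.
- by move/Ix ->.
- by move=> E; have := Dxy a b'; rewrite E eqxx.
- by move=> E; have := Dxy a' b; rewrite E eqxx.
by move/Iy ->.
Qed.

Definition xen n (A : {set 'I_n}) k (E : #|A| = k) : 'I_k -> 'I_n :=
  fun i => enum_val (cast_ord (esym E) i).

Lemma xen_incr n (A : {set 'I_n}) k (E : #|A| = k) : incr (xen E).
Proof. by move=> i j ij; apply: enum_incr. Qed.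

Lemma xen_img n (A : {set 'I_n}) k (E : #|A| = k) v :
  (v \in A) = [exists i, xen E i == v].
Proof.
apply/idP/existsP => [vA|[i /eqP <-]]; last exact: enum_valP.
by exists (cast_ord E (enum_rank_in vA v)); rewrite /xen cast_ordK enum_rankK_in.
Qed.

Lemma xen_in n (A : {set 'I_n}) k (E : #|A| = k) i : xen E i \in A.
Proof. by rewrite (xen_img E); apply/existsP; exists i. Qed.

Lemma ptens_l k l (s : 'S_k) (t : 'S_l) a : ptens s t (lshift l a) = lshift l (s a).
Proof. by rewrite /ptens split_l. Qed.
Lemma ptens_r k l (s : 'S_k) (t : 'S_l) b : ptens s t (rshift k b) = rshift k (t b).
Proof. by rewrite /ptens split_r. Qed.

Section Prod.
Variables (k l : nat) (r : 'S_(k + l)).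

Definition Pset : {set 'I_(k + l)} := [set p | (r p < k)%N].

Lemma cardP : #|Pset| = k.
Proof.
have -> : Pset = r @^-1: [set lshift l a | a in 'I_k].
  apply/setP=> p; rewrite !inE; apply/idP/imsetP => [|[a _ ->]].
    case: (split_ordP (r p)) => [a ->|b ->]; first by exists a.
    by [].
  exact: (ltn_ord a).
by rewrite card_preimset ?card_imset ?cardsT ?card_ord //; [apply: lshift_inj | apply: perm_inj].
Qed.

Lemma cardQ : #|~: Pset| = l.
Proof. by have := cardsC Pset; rewrite cardP card_ord => /eqP; rewrite eqn_add2l => /eqP. Qed.

Definition xP := xen cardP.
Definition xQ := xen cardQ.

Lemma xP_in a : (r (xP a) < k)%N.
Proof. by have := xen_in cardP a; rewrite inE. Qed.
Lemma xQ_in b : (k <= r (xQ b))%N.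
Proof. by have := xen_in cardQ b; rewrite !inE -leqNgt. Qed.

Lemma einj : injective (mrg xP xQ).
Proof.
apply: mrg_inj; try exact: incr_inj (xen_incr _).
move=> a b; apply/eqP=> E; have := xP_in a; rewrite E ltnNge xQ_in //.
Qed.

Definition einv : 'S_(k + l) := perm einj.
Definition e0 : 'S_(k + l) := (einv^-1)%g.

Lemma tP b : (r (xQ b) - k < l)%N.
Proof. by rewrite ltn_subLR ?xQ_in //. Qed.

Lemma sinj : injective (fun a => Ordinal (xP_in a)).
Proof. by move=> a a' [/val_inj/perm_inj/(incr_inj (xen_incr _))]. Qed.
Lemma tinj : injective (fun b => Ordinal (tP b)).
Proof.
move=> b b' [E]; have : r (xQ b) = r (xQ b') :> nat.
  by rewrite -(subnKC (xQ_in b)) -(subnKC (xQ_in b')) E.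
by move/val_inj/perm_inj/(incr_inj (xen_incr _)).
Qed.

Definition s0 : 'S_k := perm sinj.
Definition t0 : 'S_l := perm tinj.

Lemma r_mrg j : r (mrg xP xQ j) = ptens s0 t0 j.
Proof.
apply: val_inj; case: (split_ordP j) => [a ->|b ->];
  rewrite ?mrg_l ?mrg_r ?ptens_l ?ptens_r /= /s0 /t0 permE //=.
by rewrite subnKC ?xQ_in.
Qed.

Lemma e0_spec : is_shuffle e0 /\ forall i, r i = ptens s0 t0 (e0 i).
Proof.
split.
  apply/forallP=> i; apply/forallP=> j; apply/implyP; rewrite /e0 invgK /einv !permE.
  case: (split_ordP i) => [a ->|b ->]; case: (split_ordP j) => [a' ->|b' ->];
    rewrite ?mrg_l ?mrg_r /=.
  - by case/andP=> aa' _; apply: xen_incr.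
  - by rewrite [(k <= a)%N]leqNgt ltn_ord andbF.
  - by case/andP=> H _; have := ltn_trans H (ltn_ord a'); rewrite ltnNge leq_addr.
  by rewrite ltn_add2l => /andP [bb' _]; apply: xen_incr.
move=> i; rewrite -r_mrg; congr (r _).
by rewrite -[mrg xP xQ _](permE einj) /e0 permKV.
Qed.

Lemma e0_uniq (s : 'S_k) (t : 'S_l) e : is_shuffle e ->
  (forall i, r i == ptens s t (e i)) -> [/\ e = e0, s = s0 & t = t0].
Proof.
move=> Sh H.
have Hr i : r ((e^-1)%g i) = ptens s t i.
  by have /eqP -> := H ((e^-1)%g i); rewrite permKV.
have Sh' (i j : 'I_(k + l)) : (i < j)%N -> (j < k)%N || (k <= i)%N -> ((e^-1)%g i < (e^-1)%g j)%N.
  by move=> ij H'; apply: (implyP (forallP (forallP Sh i) j)); rewrite ij.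
have EL : (fun a => (e^-1)%g (lshift l a)) =1 xP.
  apply: incr_uniq.
  - by move=> a a' aa'; apply: Sh' => //; rewrite /= ltn_ord.
  - exact: xen_incr.
  - move=> a; have : (e^-1)%g (lshift l a) \in Pset by rewrite inE Hr ptens_l /=.
    by rewrite (xen_img cardP) => /existsP [a' /eqP <-]; exists a'.
  move=> a'; have : (r (xP a') < k)%N := xP_in a'.
  rewrite -{1}[xP a'](permK e) Hr.
  case: (split_ordP (e (xP a'))) => [a Ea|b ->]; last by rewrite /= ptens_r /= ltnNge leq_addr.
  by move=> _; exists a; rewrite -Ea permK.
have ER : (fun b => (e^-1)%g (rshift k b)) =1 xQ.
  apply: incr_uniq.
  - by move=> b b' bb'; apply: Sh'; rewrite /= ?ltn_add2l ?leq_addr ?orbT.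
  - exact: xen_incr.
  - move=> b; have : (e^-1)%g (rshift k b) \in ~: Pset.
      by rewrite !inE Hr ptens_r /= -leqNgt leq_addr.
    by rewrite (xen_img cardQ) => /existsP [b' /eqP <-]; exists b'.
  move=> b'; have : (k <= r (xQ b'))%N := xQ_in b'.
  rewrite -{1}[xQ b'](permK e) Hr.
  case: (split_ordP (e (xQ b'))) => [a ->|b Eb]; first by rewrite /= ptens_l /= leqNgt ltn_ord.
  by move=> _; exists b; rewrite -Eb permK.
have Ee : e = e0.
  rewrite /e0 -[e]invgK; congr (_^-1)%g; apply/permP=> i; rewrite /einv [RHS]permE.
  case: (split_ordP i) => [a ->|b ->]; rewrite ?mrg_l ?mrg_r.
    exact: (EL a).
  exact: (ER b).
split=> //.
  apply/permP=> a; apply: val_inj; rewrite /s0 permE /=.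
  by rewrite -(EL a) Hr ptens_l.
apply/permP=> b; apply: val_inj; rewrite /t0 permE /=.
by rewrite -(ER b) Hr ptens_r /= addKn.
Qed.

Lemma rinv_l a : (r^-1)%g (lshift l a) = xP ((s0^-1)%g a).
Proof.
have -> : lshift l a = r (xP ((s0^-1)%g a)).
  by apply: val_inj; rewrite /= -[in LHS](permKV s0 a) {1}/s0 permE.
by rewrite permK.
Qed.

Lemma rinv_r b : (r^-1)%g (rshift k b) = xQ ((t0^-1)%g b).
Proof.
have -> : rshift k b = r (xQ ((t0^-1)%g b)).
  by apply: val_inj; rewrite /= -[in LHS](permKV t0 b) {1}/t0 permE /= subnKC ?xQ_in.
by rewrite permK.
Qed.

End Prod.

Section HH.
Local Open Scope ring_scope.

Lemma fqmul_val (K : numFieldType) k l (r : 'S_(k + l)) (s : 'S_k) (t : 'S_l) :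
  fqmul K s t r = ((((s == s0 r) && (t == t0 r) : bool) : nat)%:R)%R.
Proof.
rewrite ffunE; congr (_%:R).
case: (boolP ((s == s0 r) && (t == t0 r))) => [/andP [/eqP -> /eqP ->]|N].
  apply: (@eq_card1 _ (e0 r)) => e; rewrite inE; apply/idP/eqP.
    by case/andP=> Sh /forallP H; have [] := e0_uniq Sh H.
  move=> ->; have [Sh H] := e0_spec r; rewrite Sh /=; apply/forallP=> i.
  by rewrite H.
apply: eq_card0 => e; rewrite inE; apply/negP=> /andP [Sh /forallP H].
by have [_ E1 E2] := e0_uniq Sh H; rewrite E1 E2 !eqxx in N.
Qed.

Lemma SF_prod k l (f : pfun k) (g : pfun l) (r : 'S_(k + l)) : lab f -> lab g ->
  (r \in SF (fconcat f g)) = (s0 r \in SF f) && (t0 r \in SF g).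
Proof.
move=> Lf Lg; rewrite !SFE ?fconcat_lab //.
apply/idP/andP => [H|[Hf Hg]].
  split; apply/forallP=> a; apply/forallP=> b; apply/implyP=> /eqP E.
    have := implyP (forallP (forallP H (lshift l a)) (lshift l b)).
    rewrite fconcat_l E eqxx !rinv_l (incr_ltE (xen_incr _)); apply=> //.
  have := implyP (forallP (forallP H (rshift k a)) (rshift k b)).
  rewrite fconcat_r E eqxx !rinv_r (incr_ltE (xen_incr _)); apply=> //.
apply/forallP=> i; apply/forallP=> j; apply/implyP.
case: (split_ordP i) => [a ->|b ->]; rewrite ?fconcat_l ?fconcat_r.
  case E: (f a) => [b|] //= /eqP [<-].
  rewrite !rinv_l (incr_ltE (xen_incr _)).
  exact: (implyP (forallP (forallP Hf a) b) (introT eqP E)).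
case E: (g b) => [c|] //= /eqP [<-].
rewrite !rinv_r (incr_ltE (xen_incr _)).
exact: (implyP (forallP (forallP Hg b) c) (introT eqP E)).
Qed.

Lemma theta_prod (K : numFieldType) k l (f : pfun k) (g : pfun l) :
  lab f -> lab g -> theta K (fconcat f g) = mulF (theta K f) (theta K g).
Proof.
move=> Lf Lg; apply/ffunP=> r; rewrite [RHS]ffunE.
rewrite (bigD1 (s0 r)) //= [X in _ + X]big1 ?addr0; last first.
  move=> s ns; apply: big1 => t _; rewrite fqmul_val (negbTE ns) mulr0 //.
rewrite (bigD1 (t0 r)) //= [X in _ + X]big1 ?addr0; last first.
  by move=> t nt; rewrite fqmul_val eqxx (negbTE nt) mulr0.
rewrite fqmul_val !eqxx mulr1 !ffunE SF_prod //.
by case: (s0 r \in SF f); case: (t0 r \in SF g); rewrite ?mul1r ?mul0r.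
Qed.

End HH.

Section Cuts.
Variables (n : nat) (f : pfun n) (Lf : lab f).

Definition dcb (B : {set 'I_n}) :=
  [forall u, forall v, (f u == Some v) ==> (v \in B) ==> (u \in B)].

Definition cut (B : {set 'I_n}) := [set v in B | [forall w in B, ~~ reach f v w]].

Lemma reach_trans u v w : reach f u v -> reach f v w -> reach f u w.
Proof.
rewrite !hof_reach // => /andP [C1 L1] /andP [C2 L2].
by rewrite (connect_trans C1 C2) (ltn_trans L2 L1).
Qed.

Lemma edge_reach u v : f u = Some v -> reach f u v.
Proof.
move=> E; rewrite hof_reach //; rewrite (labP Lf E) andbT.
by apply: connect1; rewrite /pedge E.
Qed.

Lemma reach_dcb B u v : dcb B -> reach f u v -> v \in B -> u \in B.
Proof.
move=> /forallP D /andP [_ C]; apply: (@connect_back _ _ (fun x => x \in B) _ _ _ C).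
by move=> a b /eqP E bB; apply: (implyP (implyP (forallP (D a) b) (introT eqP E))).
Qed.

Lemma lea_dcb c : dcb (lea f c).
Proof.
apply/forallP=> u; apply/forallP=> v; apply/implyP=> /eqP E; apply/implyP; rewrite !inE.
case/orP=> [vc|/existsP [v' /andP [v'c R]]]; apply/orP; right; apply/existsP.
  by exists v; rewrite vc edge_reach.
by exists v'; rewrite v'c (reach_trans (edge_reach E) R).
Qed.

Lemma lea_cut B : dcb B -> lea f (cut B) = B.
Proof.
move=> D; apply/setP=> w; apply/idP/idP.
  rewrite inE; case/orP=> [|/existsP [v /andP [vc R]]]; first by rewrite ?inE => /andP [].
  by move: vc; rewrite ?inE => /andP [vB _]; apply: reach_dcb R vB.
move=> wB.
have Pw : (w \in B) && connect (pedge f) w w by rewrite wB connect0.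
case: (@arg_minnP _ w (fun u => (u \in B) && connect (pedge f) w u) (fun u => val u) Pw).
move=> v /andP [vB C] Hmin.
have vcut : v \in cut B.
  rewrite inE vB /=; apply/forallP=> u; apply/implyP=> uB; apply/negP=> R.
  have := R; rewrite hof_reach // => /andP [C' L].
  have := Hmin u; rewrite uB (connect_trans C C') => /(_ isT).
  by rewrite leqNgt L.
rewrite inE; case: (altP (w =P v)) => [->|nwv]; first by rewrite vcut.
apply/orP; right; apply/existsP; exists v; rewrite vcut /= /reach nwv C //.
Qed.

Lemma cut_adm B : adm_cut f (cut B).
Proof.
apply/forallP=> v; apply/implyP=> vc; apply/forallP=> w; apply/implyP=> wc.
move: vc wc; rewrite !inE => /andP [_ /forallP H] /andP [wB _].
exact: (implyP (H w) wB).
Qed.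

Lemma cut_lea c : adm_cut f c -> cut (lea f c) = c.
Proof.
move=> /forallP A; have Ac v w : v \in c -> w \in c -> ~~ reach f v w.
  by move=> vc wc; apply: (implyP (forallP (implyP (A v) vc) w) wc).
apply/setP=> v; rewrite !inE; apply/idP/idP.
  case/andP=> /orP [//|/existsP [v' /andP [v'c R]]] /forallP H.
  have := implyP (H v'); rewrite !inE v'c /= => /(_ isT); rewrite R //.
move=> vc; rewrite vc /=; apply/forallP=> w; apply/implyP.
rewrite !inE => /orP [wc|/existsP [w' /andP [w'c R]]]; first by apply: Ac.
by apply/negP=> R'; have := Ac _ _ vc w'c; rewrite (reach_trans R' R).
Qed.

Lemma sum_cuts (F : {set 'I_n} -> nat) :
  \sum_(c | adm_cut f c) F (lea f c) = \sum_(B | dcb B) F B.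
Proof.
rewrite (reindex_onto (lea f) cut (P := dcb)); last by move=> B; apply: lea_cut.
apply: eq_bigl => c; apply/idP/andP => [Ac|[_ /eqP <-]]; last exact: cut_adm.
by rewrite lea_dcb cut_lea.
Qed.

End Cuts.

Lemma sum_le1 (T : finType) (P : pred T) :
  (forall x y, P x -> P y -> x = y) -> \sum_(x : T) (P x : nat) = [exists x, P x].
Proof.
move=> U; case: (boolP [exists x, P x]) => [/existsP [x0 Px0]|/existsPn N].
  rewrite (bigD1 x0) //= Px0 big1 // => y ny; case: (boolP (P y)) => // Py.
  by rewrite (U _ _ Py Px0) eqxx in ny.
by rewrite big1 // => y _; rewrite (negbTE (N y)).
Qed.

Lemma std_incr m n (w : 'I_m -> 'I_n) (q : 'S_m) : std_of w q ->
  incr (fun j => w ((q^-1)%g j)).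
Proof.
move=> /forallP H j j' jj'; have := forallP (H ((q^-1)%g j)) ((q^-1)%g j').
by rewrite !permKV jj' => /eqP <-.
Qed.

Section Cop.
Variables (k l : nat) (f : pfun (k + l)) (Lf : lab f) (q1 : 'S_k) (q2 : 'S_l).

Definition Bs (s : 'S_(k + l)) : {set 'I_(k + l)} := [set s (rshift k j) | j in 'I_l].

Lemma card_Bs s : #|Bs s| = l.
Proof.
rewrite card_imset ?cardsT ?card_ord // => a b /perm_inj; exact: rshift_inj.
Qed.

Lemma card_compl (B : {set 'I_(k + l)}) : #|B| = l -> #|~: B| = k.
Proof. by move=> E; have := cardsC B; rewrite E card_ord addnC => /eqP; rewrite eqn_add2r => /eqP. Qed.

Section Shape.
Variables (B : {set 'I_(k + l)}) (xA : 'I_k -> 'I_(k + l)) (xB : 'I_l -> 'I_(k + l)).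
Hypotheses (HxA : incr xA) (IA : forall v, (v \in ~: B) = [exists i, xA i == v]).
Hypotheses (HxB : incr xB) (IB : forall v, (v \in B) = [exists i, xB i == v]).

Lemma shape s : B = Bs s -> std_of (fun i => s (lshift l i)) q1 ->
  std_of (fun j => s (rshift k j)) q2 ->
  (forall i, s (lshift l i) = xA (q1 i)) /\ (forall j, s (rshift k j) = xB (q2 j)).
Proof.
move=> EB S1 S2; split.
  have E : (fun i => s (lshift l ((q1^-1)%g i))) =1 xA.
    apply: incr_uniq (std_incr S1) HxA _ _.
      move=> i; have : s (lshift l ((q1^-1)%g i)) \in ~: B.
        rewrite inE EB; apply/imsetP=> [[m _ /perm_inj /eqP]].
        by rewrite eq_lrshift.
      by rewrite IA => /existsP [j /eqP <-]; exists j.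
    move=> j; case: (split_ordP ((s^-1)%g (xA j))) => [a Ea|b Eb].
      by exists (q1 a); rewrite permK -Ea permKV.
    have : xA j \in ~: B by rewrite IA; apply/existsP; exists j.
    rewrite inE EB -[xA j](permKV s) Eb => /negP N; exfalso; apply: N.
    by apply/imsetP; exists b.
  by move=> i; rewrite -E permK.
have E : (fun j => s (rshift k ((q2^-1)%g j))) =1 xB.
  apply: incr_uniq (std_incr S2) HxB _ _.
    move=> j; have : s (rshift k ((q2^-1)%g j)) \in B.
      by rewrite EB; apply/imsetP; exists ((q2^-1)%g j).
    by rewrite IB => /existsP [i /eqP <-]; exists i.
  move=> i; have : xB i \in B by rewrite IB; apply/existsP; exists i.
  by rewrite EB => /imsetP [m _ ->]; exists (q2 m); rewrite permK.
by move=> j; rewrite -E permK.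
Qed.

Lemma construct : exists s, [/\ B = Bs s, std_of (fun i => s (lshift l i)) q1,
  std_of (fun j => s (rshift k j)) q2, (forall i, s (lshift l i) = xA (q1 i))
  & (forall j, s (rshift k j) = xB (q2 j))].
Proof.
have inj : injective (mrg (fun i => xA (q1 i)) (fun j => xB (q2 j))).
  apply: mrg_inj.
  - by move=> a b /(incr_inj HxA) /perm_inj.
  - by move=> a b /(incr_inj HxB) /perm_inj.
  move=> a b; apply/eqP=> E.
  have : xA (q1 a) \in ~: B by rewrite IA; apply/existsP; exists (q1 a).
  by rewrite inE E IB negb_exists => /forallP /(_ (q2 b)); rewrite eqxx.
exists (perm inj).
have L i : perm inj (lshift l i) = xA (q1 i) by rewrite permE mrg_l.
have R j : perm inj (rshift k j) = xB (q2 j) by rewrite permE mrg_r.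
split=> //.
- apply/setP=> v; rewrite IB; apply/existsP/imsetP => [[i /eqP <-]|[j _ ->]].
    by exists ((q2^-1)%g i) => //; rewrite R permKV.
  by exists (q2 j); rewrite R.
- by apply/forallP=> i; apply/forallP=> j; rewrite !L (incr_ltE HxA).
by apply/forallP=> i; apply/forallP=> j; rewrite !R (incr_ltE HxB).
Qed.

Lemma SF_split (s : 'S_(k + l)) (a : pfun k) (b : pfun l) :
  (forall i j, (a i == Some j) = (f (xA i) == Some (xA j))) ->
  (forall i j, (b i == Some j) = (f (xB i) == Some (xB j))) ->
  (forall i, s (lshift l i) = xA (q1 i)) -> (forall j, s (rshift k j) = xB (q2 j)) ->
  SFe f s = [&& dcb f B, SFe a q1 & SFe b q2].
Proof.
move=> Ra Rb Ls Rs.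
have PA c : (s^-1)%g (xA c) = lshift l ((q1^-1)%g c).
  by rewrite -{1}[c](permKV q1) -Ls permK.
have PB c : (s^-1)%g (xB c) = rshift k ((q2^-1)%g c).
  by rewrite -{1}[c](permKV q2) -Rs permK.
have dec u : (exists c, u = xA c /\ u \notin B) \/ (exists c, u = xB c /\ u \in B).
  case: (boolP (u \in B)) => uB.
    by right; move: (uB); rewrite IB => /existsP [c /eqP <-]; exists c.
  left; have uA : u \in ~: B by rewrite inE.
  by move: uA; rewrite IA => /existsP [c /eqP Ec]; exists c; rewrite -Ec.
apply/idP/and3P.
  move=> H; split.
  - apply/forallP=> u; apply/forallP=> v; apply/implyP=> /eqP E; apply/implyP=> vB.
    case: (dec u) => [[c [Eu uB]]|[c [_ ->]]] //; subst u; exfalso.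
    have := implyP (forallP (forallP H (xA c)) v); rewrite E eqxx => /(_ isT).
    move: vB; rewrite IB => /existsP [d /eqP <-]; rewrite PA PB /= => Hlt.
    by have := ltn_trans Hlt (ltn_ord _); rewrite ltnNge leq_addr.
  - apply/forallP=> i; apply/forallP=> j; apply/implyP; rewrite Ra => Hij.
    by have := implyP (forallP (forallP H (xA i)) (xA j)) Hij; rewrite !PA.
  apply/forallP=> i; apply/forallP=> j; apply/implyP; rewrite Rb => Hij.
  by have := implyP (forallP (forallP H (xB i)) (xB j)) Hij; rewrite !PB /= ltn_add2l.
case=> D Sa Sb; apply/forallP=> u; apply/forallP=> v; apply/implyP=> /eqP E.
case: (dec u) => [[c [Eu uB]]|[c [Eu uB]]]; case: (dec v) => [[d [Ev vB]]|[d [Ev vB]]];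
  subst u v.
- have := implyP (forallP (forallP Sa c) d); rewrite Ra E eqxx => /(_ isT).
  by rewrite !PA.
- have := implyP (implyP (forallP (forallP D (xA c)) (xB d)) _) vB.
  by rewrite E eqxx (negbTE uB) => /(_ isT).
- by rewrite PA PB /=; apply: leq_trans (ltn_ord _) (leq_addr _ _).
have := implyP (forallP (forallP Sb c) d); rewrite Rb E eqxx => /(_ isT).
by rewrite !PB /= ltn_add2l.
Qed.

End Shape.
End Cop.

Lemma incr_same n k (A : {set 'I_n}) (x y : 'I_k -> 'I_n) : incr x -> incr y ->
  (forall v, (v \in A) = [exists i, x i == v]) ->
  (forall v, (v \in A) = [exists i, y i == v]) -> x =1 y.
Proof.
move=> Hx Hy Ix Iy; apply: incr_uniq Hx Hy _ _.
  move=> i; have : x i \in A by rewrite Ix; apply/existsP; exists i.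
  by rewrite Iy => /existsP [j /eqP <-]; exists j.
move=> j; have : y j \in A by rewrite Iy; apply/existsP; exists j.
by rewrite Ix => /existsP [i /eqP <-]; exists i.
Qed.

Lemma restr_rel n k (f : pfun n) (A : {set 'I_n}) (a : pfun k) (xA : 'I_k -> 'I_n) :
  restr_is f A a -> incr xA -> (forall v, (v \in A) = [exists i, xA i == v]) ->
  forall i j, (a i == Some j) = (f (xA i) == Some (xA j)).
Proof.
case/restr_isP=> x [Hx Ix Ra] HxA IA i j.
by have E := incr_same Hx HxA Ix IA; rewrite Ra !E.
Qed.

Section Cop2.
Variables (k l : nat) (f : pfun (k + l)) (Lf : lab f) (q1 : 'S_k) (q2 : 'S_l).

Definition Gp (B : {set 'I_(k + l)}) (p : pfun k * pfun l) :=
  [&& restr_is f (~: B) p.1, restr_is f B p.2, q1 \in SF p.1 & q2 \in SF p.2].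
Definition G (B : {set 'I_(k + l)}) := [exists p, Gp B p].
Definition X (s : 'S_(k + l)) := [&& s \in SF f, std_of (fun i => s (lshift l i)) q1
  & std_of (fun j => s (rshift k j)) q2].

Lemma perB B : [exists s, (B == Bs s) && X s] = dcb f B && G B.
Proof.
apply/existsP/andP.
  case=> s /andP [/eqP EB /and3P [Ss S1 S2]].
  have cB : #|B| = l by rewrite EB card_Bs.
  have cA := card_compl cB.
  have [xA [HxA IA]] := incr_exists cA; have [xB [HxB IB]] := incr_exists cB.
  have [Ls Rs] := shape HxA IA HxB IB EB S1 S2.
  have [a Ra] := restr_exists f cA; have [b Rb] := restr_exists f cB.
  have := SF_split IA IB (restr_rel Ra HxA IA) (restr_rel Rb HxB IB) Ls Rs.
  rewrite -SFE // Ss => /esym /and3P [D Sa Sb]; split=> //.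
  apply/existsP; exists (a, b); rewrite /Gp /= Ra Rb.
  by rewrite !SFE ?Sa ?Sb //; [apply: restr_lab Lf Rb | apply: restr_lab Lf Ra].
case=> D /existsP [[a b] /and4P [/= Ra Rb Sa Sb]].
have cB : #|B| = l := restr_card Rb.
have cA := card_compl cB.
have [xA [HxA IA]] := incr_exists cA; have [xB [HxB IB]] := incr_exists cB.
have [s [EB S1 S2 Ls Rs]] := construct q1 q2 HxA IA HxB IB.
exists s; rewrite /X EB eqxx S1 S2 /= andbT.
rewrite SFE // (SF_split IA IB (restr_rel Ra HxA IA) (restr_rel Rb HxB IB) Ls Rs).
rewrite D -!SFE ?Sa ?Sb //; [apply: restr_lab Lf Rb | apply: restr_lab Lf Ra].
Qed.

End Cop2.

Lemma card_sum (T : finType) (P : pred T) : #|P| = \sum_(x : T) (P x : nat).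
Proof.
rewrite -sum1_card big_mkcond /=; apply: eq_bigr => x _.
by rewrite unfold_in; case: (P x).
Qed.

Lemma cond_and (T : finType) (P Q : pred T) :
  \sum_(x : T) (P x && Q x : nat) = \sum_(x | P x) (Q x : nat).
Proof. by rewrite [RHS]big_mkcond; apply: eq_bigr => x _; case: (P x). Qed.

Section Cop3.
Variables (k l : nat) (f : pfun (k + l)) (Lf : lab f) (q1 : 'S_k) (q2 : 'S_l).

Lemma cop_nat :
  \sum_(s : 'S_(k + l)) (X f q1 q2 s : nat) =
  \sum_(p : pfun k * pfun l) #|[pred c : {set 'I_(k + l)} | adm_cut f c
      && restr_is f (~: lea f c) p.1 && restr_is f (lea f c) p.2]|
      * ((q1 \in SF p.1) * (q2 \in SF p.2)).
Proof.
transitivity (\sum_(B : {set 'I_(k + l)}) (dcb f B && G f q1 q2 B : nat)).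
  transitivity (\sum_(s : 'S_(k + l)) \sum_(B : {set 'I_(k + l)})
                  ((B == Bs s) && X f q1 q2 s : nat)).
    apply: eq_bigr => s _; rewrite (bigD1 (Bs s)) //= eqxx big1 ?addn0 //.
    by move=> B nB; rewrite (negbTE nB).
  rewrite exchange_big; apply: eq_bigr => B _; rewrite sum_le1 ?perB //.
  move=> s s' /andP [/eqP EB /and3P [_ S1 S2]] /andP [/eqP EB' /and3P [_ S1' S2']].
  have cB : #|B| = l by rewrite EB card_Bs.
  have cA := card_compl cB.
  have [xA [HxA IA]] := incr_exists cA; have [xB [HxB IB]] := incr_exists cB.
  have [Ls Rs] := shape HxA IA HxB IB EB S1 S2.
  have [Ls' Rs'] := shape HxA IA HxB IB EB' S1' S2'.
  by apply/permP=> i; case: (split_ordP i) => [a ->|b ->]; rewrite ?Ls ?Ls' ?Rs ?Rs'.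
rewrite cond_and -(sum_cuts Lf) -cond_and.
symmetry.
transitivity (\sum_(p : pfun k * pfun l) \sum_(c : {set 'I_(k + l)})
    ((adm_cut f c && restr_is f (~: lea f c) p.1 && restr_is f (lea f c) p.2 : nat)
      * ((q1 \in SF p.1) * (q2 \in SF p.2)))).
  apply: eq_bigr => p _; rewrite -big_distrl /=; congr (_ * _).
  exact: (card_sum [pred c : {set 'I_(k + l)} | adm_cut f c
      && restr_is f (~: lea f c) p.1 && restr_is f (lea f c) p.2]).
rewrite exchange_big; apply: eq_bigr => c _.
case: (adm_cut f c) => /=; last by rewrite big1.
rewrite -sum_le1.
  by apply: eq_bigr => p _; rewrite !mulnb /Gp !andbA.
move=> [a b] [a' b'] /and4P [/= R1 R2 _ _] /and4P [/= R1' R2' _ _].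
by rewrite (restr_uniq R1 R1') (restr_uniq R2 R2').
Qed.

End Cop3.

Lemma theta_cop (K : numFieldType) k l (f : pfun (k + l)) : lab f ->
  copF (theta K f) = thetaT (hcop K f).
Proof.
move=> Lf; apply/ffunP=> [[q1 q2]]; rewrite !ffunE.
transitivity ((\sum_(s : 'S_(k + l)) (X f q1 q2 s : nat))%:R : K)%R.
  rewrite natr_sum; apply: eq_bigr => s _; rewrite !ffunE /= -natrM mulnb //.
rewrite (cop_nat Lf) natr_sum; apply: eq_bigr => p _.
by rewrite !ffunE -!natrM.
Qed.

Local Open Scope ring_scope.

Theorem mainTheorem7 (K : numFieldType) :
  (* H_ho is closed under product and coproduct *)
  (forall k l (f : pfun k) (g : pfun l),
      is_hof f -> is_hof g -> is_hof (fconcat f g)) /\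
  (forall k l (f : pfun (k + l)) (p : pfun k * pfun l),
      is_hof f -> hcop K f p != 0 -> is_hof p.1 && is_hof p.2) /\
  (* Theta is a graded linear bijection H_ho,n -> FQSym_n *)
  (forall n, bijective (@thetaH K n)) /\
  (* unit *)
  (theta K empty_forest = [ffun _ => 1]) /\
  (* product *)
  (forall k l (f : pfun k) (g : pfun l), is_hof f -> is_hof g ->
      theta K (fconcat f g) = mulF (theta K f) (theta K g)) /\
  (* coproduct *)
  (forall k l (f : pfun (k + l)), is_hof f ->
      copF (theta K f) = thetaT (hcop K f)).
Proof.
split; [|split; [|split; [|split; [|split]]]].
- by move=> k l f g; rewrite !hofE; apply: fconcat_lab.
- by move=> k l f p; apply: hcop_hof.
- by move=> n; apply: thetaH_bij.
- exact: theta_empty.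
- by move=> k l f g; rewrite !hofE; apply: theta_prod.
by move=> k l f; rewrite hofE; apply: theta_cop.
Qed.
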